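(* Let $a$ be a positive integer and define $(U_n)_{n\ge1}$ by $U_1=a$, $U_2=3a$ and $U_{n+2}=U_{n+1}+U_n$ for $n\ge1$. Then $(U_n)$ is exactly realizable.
   Context: For a homeomorphism $f:X\to X$ of a compact metric space $X$, let $\mathrm{Per}_n(f)=\#\{x\in X\mid f^n x=x\}$. A sequence $(U_n)_{n\ge1}$ of non-negative integers is called exactly realizable if there exist a compact metric space $X$ and a homeomorphism $f:X\to X$ with $\mathrm{Per}_n(f)=U_n$ for all $n\ge1$. *)

(* Defs.v *)
From HB Require Import structures.
From mathcomp Require Import all_boot all_order all_algebra.
From mathcomp Require Import all_classical all_reals all_analysis.
From mathcomp Require Import Rstruct Rstruct_topology.
From Stdlib Require Import Rdefinitions.
Set Implicit Arguments. Unset Strict Implicit. Unset Printing Implicit Defensive.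
Local Open Scope classical_set_scope.
Local Open Scope card_scope.

(* A compact metric space is modelled as a Hausdorff (i.e. metric, not merely
   pseudometric) pseudoMetricType over the Stdlib reals whose whole space is
   compact. *)
Definition exactly_realizable (U : nat -> nat) : Prop :=
  exists (X : pseudoMetricType R) (f g : X -> X),
    hausdorff_space X /\ compact [set: X] /\
    continuous f /\ continuous g /\ cancel f g /\ cancel g f /\
    forall n : nat, (1 <= n)%N -> [set x : X | iter n f x = x] #= `I_(U n).

(* Submission.v *)
Require Import Defs.
From mathcomp Require Import all_boot.
From HB Require structures.
From mathcomp Require all_order all_algebra zify.
From mathcomp Require all_classical all_reals all_analysis.
From mathcomp Require Rstruct Rstruct_topology.
From Stdlib Require Rdefinitions.

Module Comb.
Import zify.
Set Implicit Arguments. Unset Strict Implicit. Unset Printing Implicit Defensive.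

Definition gp (u v : bool) := ~~ (u && v).

Fixpoint allw (n : nat) : seq (seq bool) :=
  if n is m.+1 then [seq false :: w | w <- allw m] ++ [seq true :: w | w <- allw m]
  else [:: [::]].

Lemma allw_uniq n : uniq (allw n).
Proof.
elim: n => //= n IH; rewrite cat_uniq !map_inj_uniq; last 2 first.
- by move=> ? ? [].
- by move=> ? ? [].
rewrite IH /= andbT; apply/hasPn => w /mapP [w0 _ ->]; by apply/mapP => -[? _ []].
Qed.

Lemma allwP n w : (w \in allw n) = (size w == n).
Proof.
elim: n w => [|n IH] w; first by case: w.
rewrite /= mem_cat; case: w => [|b w].
  by apply/negbTE/norP; split; apply/mapP => -[? _].
have i1 (b' : bool) : injective (cons b') by move=> ? ? [].
case: b.
- have -> : (true :: w \in [seq false :: w | w <- allw n]) = false.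
    by apply/mapP => -[? _ []].
  by rewrite /= (mem_map (i1 true)) IH.
- have -> : (false :: w \in [seq true :: w | w <- allw n]) = false.
    by apply/mapP => -[? _ []].
  by rewrite orbF (mem_map (i1 false)) IH.
Qed.

Definition Gc u m v := count (fun w => path gp u (rcons w v)) (allw m).

Lemma Gc0 u v : Gc u 0 v = gp u v.
Proof. by rewrite /Gc /= addn0 andbT. Qed.

Lemma GcS u m v : Gc u m.+1 v = gp u false * Gc false m v + gp u true * Gc true m v.
Proof.
rewrite /Gc /= count_cat !count_map /preim /=.
case: u; rewrite /gp /= ?mul1n ?mul0n //.
by congr addn; elim: (allw m).
Qed.

Definition Tc m := Gc false m false + Gc true m true.

Lemma TcSS m : Tc m.+2 = Tc m.+1 + Tc m.
Proof.
rewrite /Tc (GcS false m.+1) (GcS true m.+1) (GcS false m) (GcS true m).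
rewrite (GcS false m true) (GcS true m true) /gp /= !mul1n !mul0n !addn0.
lia.
Qed.

Definition Sg n := [seq w <- allw n | cycle gp w].

Lemma size_Sg m : size (Sg m.+1) = Tc m.
Proof.
rewrite /Sg size_filter /= count_cat !count_map /Tc /Gc.
by congr addn; apply: eq_count.
Qed.

Lemma Tc01 : Tc 0 = 1 /\ Tc 1 = 3.
Proof. by []. Qed.

Lemma memSg w n : (w \in Sg n) = cycle gp w && (size w == n).
Proof. by rewrite /Sg mem_filter allwP. Qed.

Lemma Sg_uniq n : uniq (Sg n).
Proof. exact/filter_uniq/allw_uniq. Qed.

Lemma path_iota (T : Type) (e : rel T) (f : nat -> T) :
  (forall k, e (f k) (f k.+1)) -> forall l j, path e (f j) [seq f k | k <- iota j.+1 l].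
Proof. by move=> h; elim=> [|l IH] j //=; rewrite h IH. Qed.

Lemma cycle_nth (T : Type) (e : rel T) (w : seq T) x0 j :
  cycle e w -> j < size w -> e (nth x0 w j) (nth x0 w (j.+1 %% size w)).
Proof.
case: w => [|y p] //= /(pathP x0) h jlt.
have := h j; rewrite size_rcons => /(_ jlt).
rewrite -rcons_cons nth_rcons /= jlt nth_rcons.
case: (ltngtP j.+1 (size p).+1) => [lt|gt|eq].
- rewrite modn_small //; rewrite ltnS in lt; by rewrite lt.
- by exfalso; lia.
- by case: eq => ->; rewrite modnn ltnn eqxx.
Qed.

End Comb.

Module IntL.
Import all_order all_algebra zify.
Import Order.TTheory GRing.Theory Num.Theory.
Set Implicit Arguments. Unset Strict Implicit. Unset Printing Implicit Defensive.
Local Open Scope ring_scope.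

Definition idx (n : nat) (i : int) : nat := absz (i %% n)%Z.

Lemma idxE n i : (0 < n)%N -> Posz (idx n i) = (i %% n)%Z.
Proof.
move=> n0; rewrite /idx; apply: gez0_abs; apply: modz_ge0.
by rewrite eqz_nat -lt0n.
Qed.

Lemma idx_lt n i : (0 < n)%N -> (idx n i < n)%N.
Proof.
move=> n0; rewrite -ltz_nat idxE //; apply: ltz_pmod; by rewrite ltz_nat.
Qed.

Lemma idx_nat n k : (k < n)%N -> idx n (Posz k) = k.
Proof. by move=> kn; rewrite /idx modz_nat modn_small. Qed.

Lemma idxS n i : (0 < n)%N -> idx n (i + 1) = ((idx n i).+1 %% n)%N.
Proof.
move=> n0; apply/eqP; rewrite -eqz_nat idxE // -modz_nat -addn1 PoszD idxE //.
by rewrite modzDml.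
Qed.

Lemma idxDn n (i : int) : (0 < n)%N -> idx n (i + n) = idx n i.
Proof. by move=> n0; rewrite /idx modzDr. Qed.

Lemma per_nat (T : Type) (x : int -> T) (n : nat) :
  (forall i : int, x (i + n) = x i) -> forall (i : int) (k : nat), x (i + (k * n)%N) = x i.
Proof.
move=> h i; elim=> [|k IH]; first by rewrite mul0n addr0.
by rewrite mulSn PoszD addrA addrAC h IH.
Qed.

Lemma per_idx (T : Type) (x : int -> T) (n : nat) : (0 < n)%N ->
  (forall i : int, x (i + n) = x i) -> forall i : int, x i = x (Posz (idx n i)).
Proof.
move=> n0 h i; rewrite idxE //.
have e := divz_eq i n.
set q := (i %/ n)%Z in e.
case: (lerP 0 q) => q0.
- rewrite {1}e addrC.
  have -> : q * n = Posz ((absz q) * n)%N by rewrite PoszM gez0_abs.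
  exact: per_nat.
- have -> : (i %% n)%Z = i + Posz ((absz q) * n)%N.
    rewrite PoszM ltz0_abs // {2}e. lia.
  by rewrite per_nat.
Qed.

End IntL.

Module Topo.
Import all_boot all_order all_algebra.
Import all_classical all_reals all_analysis.
Import Rstruct Rstruct_topology.
Import Order.TTheory GRing.Theory Num.Theory.
Set Implicit Arguments. Unset Strict Implicit. Unset Printing Implicit Defensive.
Local Open Scope classical_set_scope.
Local Open Scope ring_scope.
Section Topo.
Variable K : finType.
Definition B : Type := prod_topology (fun _ : int => discrete_topology K).

Lemma B_compact : compact [set: B].
Proof.
have := @tychonoff int (fun _ => discrete_topology K) (fun _ => setT)
  (fun _ => @finite_compact (discrete_topology K) setT (@finite_finset K setT)).

by congr compact; rewrite eqEsubset.
Qed.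

Lemma B_hausdorff : hausdorff_space B.
Proof. by apply: hausdorff_product => ?; apply: discrete_hausdorff. Qed.

Lemma proj_nbhs (x : B) (i : int) : nbhs x [set y : B | y i = x i].
Proof.
have := @proj_continuous int (fun _ => discrete_topology K) i x.
by move=> /(_ _ (discrete_set1 (x i))).
Qed.

Definition sh (d : int) (x : B) : B := fun i => x (i + d).

Lemma sh_continuous d : continuous (sh d).
Proof.
move=> x.
have H := @pointwise_cvgP (discrete_topology int) (discrete_topology K) (sh d @ nbhs x) (sh d x) _.
apply: (proj2 (H _)) => t.
exact: (@proj_continuous int (fun _ => discrete_topology K) (t + d) x).
Qed.

Variable P : K -> K -> bool.
Definition G : set B := [set x | forall i : int, P (x i) (x (i + 1))].

Lemma G_closed : closed G.
Proof.
move=> x clx i.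
have N : nbhs x ([set y : B | y i = x i] `&` [set y : B | y (i + 1) = x (i + 1)]).
  by apply: filterI; apply: proj_nbhs.
have [y [Gy [/= <- <-]]] := clx _ N.
exact: Gy.
Qed.

Lemma G_compact : compact G.
Proof. exact: (subclosed_compact G_closed B_compact). Qed.

Definition S : Type := set_type G.

Lemma S_compact : compact [set: S].
Proof.
move=> F PF _.
have FG : F (@set_val _ G @^-1` G).
  have FF : Filter F := PF.
  have FT := @filterT _ F FF.
  apply: filterS FT => s _ /=; exact: set_valP.
have [b [Gb clb]] := G_compact (fmap_proper_filter (@set_val _ G) PF) FG.
exists (exist _ b (mem_set Gb)); split => //.
move=> A C FA.
case=> _ /= [[W oW <-] /= Wb WC].
have FA' : F (@set_val _ G @^-1` (@set_val _ G @` A)).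
  by apply: filterS FA => y Ay; exists y.
have NW : nbhs b W by apply: open_nbhs_nbhs.
have [z [[y Ay yz] Wz]] := clb _ _ FA' NW.
exists y; split => //; apply: WC => /=; rewrite /= -yz in Wz; exact: Wz.
Qed.

Lemma S_hausdorff : hausdorff_space S.
Proof.
move=> p q clpq; apply: val_inj; apply: B_hausdorff => A C NA NC.
have NA' := @initial_continuous _ _ (@set_val _ G) p A NA.
have NC' := @initial_continuous _ _ (@set_val _ G) q C NC.
have [s [As Cs]] := clpq _ _ NA' NC'.
by exists (val s).
Qed.

Lemma shG d x : G x -> G (sh d x).
Proof. by move=> Gx i; rewrite /sh addrAC; exact: Gx. Qed.

Definition fS d (s : S) : S := exist _ (sh d (val s)) (mem_set (shG d (set_valP s))).

Lemma fS_continuous d : continuous (fS d).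
Proof.
apply: (@continuous_comp_initial _ _ _ (@set_val _ G)).
have -> : (@set_val _ G) \o fS d = sh d \o (@set_val _ G) by [].
move=> s; apply: continuous_comp; last exact: sh_continuous.
exact: initial_continuous.
Qed.

Lemma fS_cancel1 : cancel (fS 1) (fS (-1)).
Proof. by move=> s; apply: val_inj; apply/funext => i /=; rewrite /sh -addrA addrN addr0. Qed.

Lemma fS_cancel2 : cancel (fS (-1)) (fS 1).
Proof. by move=> s; apply: val_inj; apply/funext => i /=; rewrite /sh addrK. Qed.

End Topo.

End Topo.

Module Main.
Import all_boot all_order all_algebra.
Import all_classical all_reals all_analysis.
Import Rstruct Rstruct_topology.
Import Order.TTheory GRing.Theory Num.Theory.
Import Comb IntL Topo.
Set Implicit Arguments. Unset Strict Implicit. Unset Printing Implicit Defensive.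
Local Open Scope classical_set_scope.
Local Open Scope ring_scope.
Local Open Scope card_scope.
Section Count.
Variable a : nat.
Definition Kt : finType := (bool * 'I_a)%type.
Definition Pk (u v : Kt) : bool := gp u.1 v.1 && (v.2 == u.2).
Definition X := S Pk.
Definition f : X -> X := @fS _ Pk 1.

Lemma iter_f (n : nat) (s : X) : val (iter n f s) = sh (Posz n) (val s).
Proof.
elim: n => [|n IH] /=.
  by apply/funext => i; rewrite /sh addr0.
by rewrite IH; apply/funext => i; rewrite /sh -addrA; congr (val s (i + _)).
Qed.

Definition wd (n : nat) (x : int -> Kt) := [seq x (Posz k) | k <- iota 0 n].
Definition Sw (n : nat) := [seq [seq (b, c) | b <- w] | c <- enum 'I_a, w <- Sg n].

Lemma size_Sw n : size (Sw n) = (a * size (Sg n))%nat.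
Proof. by rewrite size_allpairs size_enum_ord. Qed.

Lemma Sw_uniq (n : nat) : (0 < n)%nat -> uniq (Sw n).
Proof.
move=> n0; apply: allpairs_uniq; first exact: enum_uniq.
  exact: Sg_uniq.
move=> [c1 w1] [c2 w2] /allpairsP [[c1' w1'] [_ /= h1 [-> ->]]].
move=> /allpairsP [[c2' w2'] [_ /= h2 [-> ->]]] /= e.
have ew : w1' = w2'.
  have := congr1 (map fst) e; rewrite -!map_comp /=.
  by rewrite (eq_map (g := id)) // map_id (eq_map (g := id)) // map_id.
move: h1 h2 e; rewrite !memSg => /andP [_ /eqP s1] /andP [_ /eqP s2].
rewrite -ew; case: w1' ew s1 => [|b w'] ew s1; first by rewrite -s1 in n0.
by move=> [->].
Qed.

Lemma fix_per (n : nat) (s : X) : iter n f s = s -> forall i : int, val s (i + n) = val s i.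
Proof.
move=> h i; have := congr1 val h; rewrite iter_f => /(congr1 (fun y => y i)).
by rewrite /sh.
Qed.

Lemma stepP (s : X) (i : int) : Pk (val s i) (val s (i + 1)).
Proof. exact: (set_valP s i). Qed.

Lemma color (s : X) (k : nat) : (val s (Posz k)).2 = (val s 0).2.
Proof.
elim: k => // k IH.
have -> : Posz k.+1 = Posz k + 1 by rewrite -addn1 PoszD.
by have /andP [_ /eqP ->] := stepP s (Posz k).
Qed.

Lemma wd_in (n : nat) (s : X) : (0 < n)%nat -> iter n f s = s -> wd n (val s) \in Sw n.
Proof.
move=> n0 h; set x := val s.
have e : wd n x = [seq (b, (x 0).2) | b <- [seq (x (Posz k)).1 | k <- iota 0 n]].
  rewrite /wd -map_comp; apply: eq_map => k /=.
  by rewrite -(color s k) -surjective_pairing.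
rewrite e; apply: allpairs_f; first exact: mem_enum.
rewrite memSg size_map size_iota eqxx andbT.
case: n n0 h e => // m _ h _ /=.
have -> : rcons [seq (x (Posz k)).1 | k <- iota 1 m] (x 0).1 =
    [seq (x (Posz k)).1 | k <- iota 1 m.+1].
  have -> : iota 1 m.+1 = rcons (iota 1 m) m.+1.
    by rewrite -cats1 -[m.+1]addn1 iotaD addnC.
  rewrite map_rcons; congr (rcons _ _).
  by have := fix_per h 0; rewrite add0r /x => ->.
apply: (path_iota (f := fun k => (x (Posz k)).1)) => k.
have -> : Posz k.+1 = Posz k + 1 by rewrite -addn1 PoszD.
by have /andP [] := stepP s (Posz k).
Qed.

Lemma per_eq (n : nat) (x y : int -> Kt) : (0 < n)%nat ->
  (forall i : int, x (i + n) = x i) -> (forall i : int, y (i + n) = y i) ->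
  wd n x = wd n y -> x = y.
Proof.
move=> n0 hx hy e; apply/funext => i.
rewrite (per_idx n0 hx i) (per_idx n0 hy i).
have lt := idx_lt i n0.
have := congr1 (fun w => nth (x 0) w (idx n i)) e.
by rewrite /wd /= !(nth_map 0%nat) ?size_iota // nth_iota // add0n.
Qed.

Lemma wd_surj (n k : nat) : (0 < n)%nat -> (k < size (Sw n))%nat ->
  exists s : X, iter n f s = s /\ wd n (val s) = nth [::] (Sw n) k.
Proof.
move=> n0 kl.
have /allpairsP [[c w] [_ /= wS ->]] := mem_nth [::] kl.
move: wS; rewrite memSg => /andP [cyc /eqP sw].
pose x : B Kt := fun i => (nth false w (idx n i), c).
have Gx : G Pk x.
  move=> i; rewrite /Pk /x /= eqxx andbT idxS //.
  rewrite -sw; apply: cycle_nth => //; rewrite sw; exact: idx_lt.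
exists (exist _ x (mem_set Gx)); split.
  apply: val_inj; rewrite iter_f; apply/funext => i.
  by rewrite /sh /= /x idxDn.
rewrite -[in RHS](mkseq_nth false w) sw /mkseq -map_comp /wd /=.
apply/eq_in_map => j; rewrite mem_iota add0n => /andP [_ jn].
by rewrite /x /= idx_nat.
Qed.

Definition Fix (n : nat) : set X := [set s | iter n f s = s].

Lemma card_Fix (n : nat) : (0 < n)%nat -> Fix n #= `I_(size (Sw n)).
Proof.
move=> n0; pose psi (s : X) := index (wd n (val s)) (Sw n).
have inj : {in Fix n &, injective psi}.
  move=> s1 s2; rewrite !inE => h1 h2 e.
  have m1 := wd_in n0 h1; have m2 := wd_in n0 h2.
  apply: val_inj; apply: (per_eq n0 (fix_per h1) (fix_per h2)).
  have e' : index (wd n (val s1)) (Sw n) = index (wd n (val s2)) (Sw n) := e.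
  by rewrite -(nth_index [::] m1) -(nth_index [::] m2) e'.
have img : psi @` Fix n = `I_(size (Sw n)).
  rewrite eqEsubset; split.
  - move=> _ [s h <-]; rewrite /= /psi index_mem; exact: wd_in.
  - move=> k /= kl; have [s [h e]] := wd_surj n0 kl.
    by exists s => //; rewrite /psi e index_uniq //; exact: Sw_uniq.
rewrite -img card_eq_sym; exact: inj_card_eq inj.
Qed.
End Count.


Lemma main' (a : nat) (U : nat -> nat) (ha : (0 < a)%nat)
  (hU1 : U 1%nat = a) (hU2 : U 2%nat = (3 * a)%nat)
  (hrec : forall n : nat, (1 <= n)%nat -> U n.+2 = (U n.+1 + U n)%nat) :
  exactly_realizable U.
Proof.
have hU : forall m, U m.+1 = (a * Tc m)%nat /\ U m.+2 = (a * Tc m.+1)%nat.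
  elim=> [|m [IH1 IH2]]; first by rewrite hU1 hU2 (proj1 Tc01) (proj2 Tc01) muln1 mulnC.
  by split => //; rewrite hrec // IH2 IH1 TcSS mulnDr.
exists (X a : pseudoMetricType Rdefinitions.R), (@f a), (@fS _ (@Pk a) (-1)).
split; first exact: S_hausdorff.
split; first exact: S_compact.
split; first exact: fS_continuous.
split; first exact: fS_continuous.
split; first exact: fS_cancel1.
split; first exact: fS_cancel2.
case=> // m _.
have := @card_Fix a m.+1 erefl.
by rewrite size_Sw size_Sg (proj1 (hU m)).
Qed.
End Main.

Theorem lemma2 (a : nat) (U : nat -> nat) (ha : (0 < a)%N)
  (hU1 : U 1%N = a) (hU2 : U 2%N = (3 * a)%N)
  (hrec : forall n : nat, (1 <= n)%N -> U n.+2 = (U n.+1 + U n)%N) :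
  exactly_realizable U.
Proof. exact: (Main.main' ha hU1 hU2 hrec). Qed.
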